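(* Let $\bm{A}=[\bm{A}_1\ \bm{A}_2]\in\mathbb{R}^{m\times(n_1+n_2)}$ have full column rank with $\bm{A}_j^\top\bm{A}_j=\bm{I}_j$, $\bm{C}:=\bm{A}_2^\top\bm{A}_1\ne0$, and suppose $r:=\operatorname{rank}(\bm{C})<\min\{n_1,n_2\}$. Let $\gamma_1^*:=\frac{2}{1+\sqrt{1-\lambda_1(\bm{C}\bm{C}^\top)}}$ and $S_{11}:=[1,\infty)\times[1,\infty)$. Then $\rho(\bm{M}(\gamma_1^*,\gamma_1^* ))=\gamma_1^*-1$ and $\min_{(\gamma_1,\gamma_2)\in S_{11}}\rho(\bm{M}(\gamma_1,\gamma_2))=\gamma_1^*-1=\dfrac{1-\sqrt{1-\lambda_1(\bm{C}\bm{C}^\top)}}{1+\sqrt{1-\lambda_1(\bm{C}\bm{C}^\top)}}.$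
   Context: $\rho$: spectral radius; $\lambda_1$: largest eigenvalue. $\bm{M}(\gamma_1,\gamma_2)=\begin{bmatrix}(1-\gamma_1)\bm{I}_1&-\gamma_1\bm{C}^\top\\-\gamma_2(1-\gamma_1)\bm{C}&(1-\gamma_2)\bm{I}_2+\gamma_1\gamma_2\bm{C}\bm{C}^\top\end{bmatrix}$, the two-block gradient descent iteration matrix with stepsizes $\gamma_1,\gamma_2$. *)

(* Defs.v *)
From HB Require Import structures.
From mathcomp Require Import all_boot all_order all_algebra.
From mathcomp Require Import classical_sets reals.
From mathcomp Require Import complex.
Set Implicit Arguments. Unset Strict Implicit. Unset Printing Implicit Defensive.
Import Order.TTheory GRing.Theory Num.Theory.
Local Open Scope ring_scope.
Local Open Scope classical_set_scope.

(* The eigenvalue set is finite and nonempty for n > 0. *)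
Definition spectral_radius (R : realType) (n : nat) (M : 'M[R]_n) : R :=
  sup [set complex.Re `|z| | z in
        [set z : R[i] | eigenvalue (map_mx (fun x : R => (x%:C)%C) M) z]].

Definition lambda_max (R : realType) (n : nat) (M : 'M[R]_n) : R :=
  sup [set x : R | eigenvalue M x].

Definition Mgd (R : realType) (n1 n2 : nat) (C : 'M[R]_(n2, n1)) (g1 g2 : R)
  : 'M[R]_(n1 + n2) :=
  block_mx ((1 - g1)%:M) (- g1 *: C^T)
           (- (g2 * (1 - g1)) *: C) ((1 - g2)%:M + (g1 * g2) *: (C *m C^T)).

(* Main.v *)
Require Import Defs.
From HB Require Import structures.
From mathcomp Require Import all_boot all_order all_algebra.
From mathcomp Require Import classical_sets reals.
From mathcomp Require Import complex.
From mathcomp.algebra_tactics Require Import ring lra.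
Import Order.TTheory GRing.Theory Num.Theory.
Local Open Scope ring_scope.

Module P1.
Set Implicit Arguments. Unset Strict Implicit. Unset Printing Implicit Defensive.
Local Open Scope classical_set_scope.

Lemma char_poly_tr (F : fieldType) n (A : 'M[F]_n) : char_poly A^T = char_poly A.
Proof.
rewrite /char_poly -det_tr; congr (\det _).
by apply/matrixP => i j; rewrite !mxE eq_sym.
Qed.

Lemma eig_colP (F : fieldType) n (A : 'M[F]_n) a :
  eigenvalue A a <-> exists2 v : 'cV_n, A *m v = a *: v & v != 0.
Proof.
rewrite eigenvalue_root_char -char_poly_tr -eigenvalue_root_char.
split => [/eigenvalueP [u hu u0]|[v hv v0]].
  exists u^T; last by rewrite trmx_eq0.
  by rewrite -[A]trmxK -trmx_mul hu linearZ.
apply/eigenvalueP; exists v^T; last by rewrite trmx_eq0.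
by rewrite -trmx_mul hv linearZ.
Qed.

Section Gen.
Variable R : realType.

Lemma eig_toC n (B : 'M[R]_n) (r : R) :
  eigenvalue (map_mx (fun x : R => (x%:C)%C) B) (r%:C)%C = eigenvalue B r.
Proof.
change (map_mx (fun x : R => (x%:C)%C) B) with (map_mx (real_complex R) B).
by rewrite !eigenvalue_root_char -map_char_poly (fmorph_root (real_complex R)).
Qed.

Lemma eig_roots n (B : 'M[R[i]]_n) :
  exists rs : seq R[i], forall z, eigenvalue B z -> z \in rs.
Proof.
have [rs hrs] := closed_field_poly_normal (char_poly B).
exists rs => z; rewrite eigenvalue_root_char hrs.
have -> : lead_coef (char_poly B) = 1 by apply/monicP; exact: char_poly_monic.
by rewrite scale1r root_prod_XsubC.
Qed.

Lemma seq_ub (T : eqType) (F : T -> R) (s : seq T) :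
  exists b, forall z, z \in s -> F z <= b.
Proof.
elim: s => [|x s [b hb]]; first by exists 0.
exists (Num.max (F x) b) => z; rewrite inE => /orP[/eqP ->|/hb h].
  by rewrite le_max lexx.
by rewrite le_max h orbT.
Qed.

Lemma seq_max (s : seq R) : s != [::] ->
  exists2 m, m \in s & forall x, x \in s -> x <= m.
Proof.
elim: s => [//|x s IH] _.
have [->|s0] := eqVneq s [::].
  by exists x; rewrite ?inE // => y; rewrite inE => /eqP ->.
have [m ms hm] := IH s0.
have [xm|mx] := leP x m.
  exists m; first by rewrite inE ms orbT.
  by move=> y; rewrite inE => /orP[/eqP ->|/hm].
exists x; first by rewrite inE eqxx.
move=> y; rewrite inE => /orP[/eqP ->//|/hm h].
exact: (le_trans h (ltW mx)).
Qed.

Lemma lam_spec n (B : 'M[R]_n) :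
  (forall x, eigenvalue B x -> x <= lambda_max B) /\
  (lambda_max B = 0 \/ eigenvalue B (lambda_max B)).
Proof.
have [rs hrs] := eig_roots (map_mx (fun x : R => (x%:C)%C) B).
pose s := [seq complex.Re z | z <- rs & eigenvalue B (complex.Re z)].
have hS : [set x | eigenvalue B x] = [set x | x \in s].
  apply/seteqP; split => x /=.
  - move=> ex; apply/mapP; exists (x%:C)%C => //.
    by rewrite mem_filter /= ex hrs // eig_toC.
  - by case/mapP => z; rewrite mem_filter => /andP[h _] ->.
have hE : forall x, eigenvalue B x -> x \in s.
  by move=> x ex; have : [set x | eigenvalue B x] x by []; rewrite hS.
rewrite /lambda_max hS.
have [s0|s0] := eqVneq s [::].
  have -> : [set x | x \in s] = set0.
    by apply/seteqP; split => x //=; rewrite s0.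
  rewrite sup0; split; last by left.
  by move=> x /hE; rewrite s0.
have [m ms hm] := seq_max s0.
have -> : sup [set x | x \in s] = m.
  apply/le_anti/andP; split.
    by apply: ge_sup; [exists m | move=> y; exact: hm].
  apply: sup_upper_bound => //; split; first by exists m.
  by exists m => y; exact: hm.
split; first by move=> x /hE; exact: hm.
right; move: ms; rewrite /s => /mapP [z]; rewrite mem_filter => /andP[h _] ->.
exact: h.
Qed.

Lemma rho_spec n (M : 'M[R]_n) :
  (forall z, eigenvalue (map_mx (fun x : R => (x%:C)%C) M) z ->
     complex.Re `|z| <= spectral_radius M) /\
  (forall b, (exists z, eigenvalue (map_mx (fun x : R => (x%:C)%C) M) z) ->
     (forall z, eigenvalue (map_mx (fun x : R => (x%:C)%C) M) z ->
        complex.Re `|z| <= b) -> spectral_radius M <= b).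
Proof.
have [rs hrs] := eig_roots (map_mx (fun x : R => (x%:C)%C) M).
have [b hb] := seq_ub (fun z : R[i] => complex.Re `|z|) rs.
split.
  move=> z ez; apply: sup_upper_bound; last by exists z.
  split; first by exists (complex.Re `|z|), z.
  by exists b => _ [y /hrs ys <-]; exact: hb.
move=> c [z ez] hc; apply: ge_sup; first by exists (complex.Re `|z|), z.
by move=> _ [y ey <-]; exact: hc.
Qed.

End Gen.

End P1.
Import P1.

Module P2.
Set Implicit Arguments. Unset Strict Implicit. Unset Printing Implicit Defensive.
Local Open Scope classical_set_scope.

Section Dot.
Variable R : realType.

Definition dot k (u v : 'cV[R]_k) : R := (u^T *m v) ord0 ord0.

Lemma dotC k (u v : 'cV[R]_k) : dot u v = dot v u.
Proof.
rewrite /dot !mxE; apply: eq_bigr => i _; rewrite !mxE mulrC //.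
Qed.

Lemma dotDr k (u v w : 'cV[R]_k) : dot u (v + w) = dot u v + dot u w.
Proof. by rewrite /dot mulmxDr mxE. Qed.

Lemma dotBr k (u v w : 'cV[R]_k) : dot u (v - w) = dot u v - dot u w.
Proof. by rewrite /dot mulmxBr !mxE. Qed.

Lemma dotZr k (u v : 'cV[R]_k) a : dot u (a *: v) = a * dot u v.
Proof. by rewrite /dot -scalemxAr mxE. Qed.

Lemma dot_mul k l (A : 'M[R]_(k, l)) u v : dot u (A *m v) = dot (A^T *m u) v.
Proof. by rewrite /dot trmx_mul trmxK mulmxA. Qed.

Lemma dot_ge0 k (v : 'cV[R]_k) : 0 <= dot v v.
Proof.
rewrite /dot mxE; apply: sumr_ge0 => i _; rewrite mxE -expr2; exact: sqr_ge0.
Qed.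

Lemma dot_gt0 k (v : 'cV[R]_k) : v != 0 -> 0 < dot v v.
Proof.
move=> v0; rewrite lt_def dot_ge0 andbT; apply: contra v0 => /eqP.
rewrite /dot mxE => /psumr_eq0P h.
apply/eqP/matrixP => i j; rewrite (ord1 j) mxE; apply/eqP; rewrite -sqrf_eq0 expr2.
have := h _ i isT; rewrite mxE => -> //.
by move=> l _; rewrite mxE -expr2 sqr_ge0.
Qed.

End Dot.

Section Bessel.
Variable R : realType.

Lemma dot0l k (w : 'cV[R]_k) : dot 0 w = 0.
Proof. by rewrite /dot trmx0 mul0mx mxE. Qed.

Lemma eig_bounds m n1 n2 (A1 : 'M[R]_(m, n1)) (A2 : 'M[R]_(m, n2)) :
  A1^T *m A1 = 1%:M -> A2^T *m A2 = 1%:M -> forall r,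
  eigenvalue ((A2^T *m A1) *m (A2^T *m A1)^T) r -> 0 <= r <= 1.
Proof.
move=> h1 h2 r /eig_colP [y hy y0].
set C := A2^T *m A1 in hy.
set w := C^T *m y.
have e1 : r * dot y y = dot w w by rewrite -dotZr -hy -mulmxA dot_mul.
have pos := dot_gt0 y0.
have hb : dot w w <= dot y y.
  set q := A2 *m y.
  have eq : dot q q = dot y y by rewrite /q dot_mul mulmxA h2 mul1mx.
  have ew : w = A1^T *m q by rewrite /w /C trmx_mul trmxK mulmxA.
  have hp : A1^T *m (q - A1 *m w) = 0 by rewrite mulmxBr [A1^T *m (A1 *m w)]mulmxA h1 mul1mx -ew subrr.
  have : dot (q - A1 *m w) (q - A1 *m w) = dot y y - dot w w.
    rewrite dotBr [X in _ - X]dot_mul hp dot0l subr0 dotC dotBr dot_mul -ew eq //.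
  by move=> e; have := dot_ge0 (q - A1 *m w); rewrite e subr_ge0.
have := dot_ge0 w.
move=> hw; apply/andP; split; nra.
Qed.

End Bessel.

End P2.
Import P2.

Module P3.
Set Implicit Arguments. Unset Strict Implicit. Unset Printing Implicit Defensive.
Local Open Scope classical_set_scope.

Section CReal.
Variable R : realType.

Definition cdot k (u v : 'cV[R[i]]_k) : R[i] :=
  ((map_mx (@conjc R) u)^T *m v) ord0 ord0.

Lemma cdot_ge0 k (u : 'cV[R[i]]_k) : 0 <= cdot u u.
Proof.
rewrite /cdot mxE; apply: sumr_ge0 => i _; rewrite !mxE mulrC; exact: mulcJ_ge0.
Qed.

Lemma cdot_gt0 k (u : 'cV[R[i]]_k) : u != 0 -> 0 < cdot u u.
Proof.
move=> u0; rewrite lt_def cdot_ge0 andbT; apply: contra u0 => /eqP.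
rewrite /cdot mxE => /psumr_eq0P h.
apply/eqP/matrixP => i j; rewrite (ord1 j) mxE; apply/eqP.
have hs : forall l, true -> 0 <= ((map_mx (@conjc R) u)^T ord0 l * u l ord0).
  by move=> l _; rewrite !mxE mulrC mulcJ_ge0.
have := h hs i isT; rewrite !mxE mulrC => /eqP; rewrite mulf_eq0 conjc_eq0 orbb //.
Qed.

Lemma real_sym_eig p q (D : 'M[R]_(p, q)) (u : 'cV[R[i]]_p) (w : R[i]) : u != 0 ->
  map_mx (real_complex R) D *m (map_mx (real_complex R) D)^T *m u = w *: u ->
  0 <= w.
Proof.
move=> u0 h; set Dc := map_mx (real_complex R) D in h.
have hconj : map_mx (@conjc R) (Dc^T *m u) = Dc^T *m map_mx (@conjc R) u.
  rewrite map_mxM; congr (_ *m _); apply/matrixP => i j; rewrite !mxE; exact: conjc_real.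
have e : w * cdot u u = cdot (Dc^T *m u) (Dc^T *m u).
  have -> : w * cdot u u = ((map_mx (@conjc R) u)^T *m (w *: u)) ord0 ord0.
    by rewrite -scalemxAr mxE.
  by rewrite /cdot hconj -h trmx_mul trmxK !mulmxA.
have hp := cdot_gt0 u0.
have -> : w = cdot (Dc^T *m u) (Dc^T *m u) / cdot u u by rewrite -e mulfK // gt_eqF.
by rewrite divr_ge0 // cdot_ge0.
Qed.

Lemma ge0_complex (w : R[i]) : 0 <= w -> w = ((complex.Re w)%:C)%C /\ 0 <= complex.Re w.
Proof.
case: w => a b; rewrite lecE /= => /andP[/eqP hb ha]; split => //.
by rewrite hb.
Qed.

End CReal.

End P3.
Import P3.

Module P4.
Set Implicit Arguments. Unset Strict Implicit. Unset Printing Implicit Defensive.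
Local Open Scope classical_set_scope.

Section Num.
Variable R : realType.

Lemma quad_bound (a k x y : R) : a <= 0 -> 0 <= k -> k <= -4 * a ->
  (x - a) * (x - a) - y * y = k * x -> (x - a) * y + y * (x - a) = k * y ->
  x ^+ 2 + y ^+ 2 <= a ^+ 2.
Proof.
move=> a0 k0 ka hre him.
have [y0|y0] := eqVneq y 0.
  rewrite y0 expr0n /= addr0; move: hre; rewrite y0 mulr0 subr0 => hre.
  have hx : (x + a) * (x + a) = x * (k + 4 * a) by nra.
  have [x0|x0] := leP 0 x.
    have : (x + a) * (x + a) <= 0 by rewrite hx; nra.
    nra.
  have hkx : k * x <= 0 by nra.
  have e : (x - a) * (x - a) = 0.
    apply/eqP; rewrite eq_le; apply/andP; split; first by rewrite hre.
    by rewrite -expr2 sqr_ge0.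
  by move/eqP: e; rewrite mulf_eq0 orbb subr_eq0 => /eqP ->.
have h2 : 2 * (x - a) = k.
  apply: (mulIf y0); nra.
nra.
Qed.

Lemma core_ineq (c u v lam : R) : 0 < c -> c <= 1 -> 0 <= u <= c -> 0 <= v <= c ->
  lam * (1 + c) ^+ 2 = 4 * c ->
  c ^+ 2 + u * v <= c * (- (u + v) + (1 + u) * (1 + v) * lam).
Proof.
move=> c0 c1 /andP[u0 uc] /andP[v0 vc] hl.
have hH : (1 + c) ^+ 2 * (c * (- (u + v) + (1 + u) * (1 + v) * lam) - c ^+ 2 - u * v)
  = (c - u) * (c - v) * ((1 - c) * (3 + c)) + 2 * (1 + c) * (1 - c) * (u * (c - v) + (c - u) * v).
  have -> : (1 + c) ^+ 2 * (c * (- (u + v) + (1 + u) * (1 + v) * lam) - c ^+ 2 - u * v)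
    = (c - u) * (c - v) * ((1 - c) * (3 + c)) + 2 * (1 + c) * (1 - c) * (u * (c - v) + (c - u) * v)
      + c * (1 + u) * (1 + v) * (lam * (1 + c) ^+ 2 - 4 * c) by ring.
  by rewrite hl subrr mulr0 addr0.
have hpos : 0 <= (c - u) * (c - v) * ((1 - c) * (3 + c)) + 2 * (1 + c) * (1 - c) * (u * (c - v) + (c - u) * v).
  apply: addr_ge0; apply: mulr_ge0; try apply: mulr_ge0; try apply: mulr_ge0; try lra.
  apply: addr_ge0; apply: mulr_ge0; lra.
rewrite -hH in hpos.
have : 0 < (1 + c) ^+ 2 by apply: exprn_gt0; lra.
move=> hg.
have := hpos; rewrite pmulr_rge0 // => h.
lra.
Qed.

Lemma root_ge (c t P : R) : 0 < c -> 0 <= P -> c ^+ 2 + P <= c * t ->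
  let q := Num.sqrt (t ^+ 2 - 4 * P) in
  (t + q) / 2 * ((t + q) / 2) - t * ((t + q) / 2) + P = 0 /\ c <= (t + q) / 2.
Proof.
move=> c0 P0 h q.
have t0 : 0 <= t by nra.
have d0 : 0 <= t ^+ 2 - 4 * P.
  have h1 : (c ^+ 2 + P) ^+ 2 <= (c * t) ^+ 2.
    have hh : 0 <= c * t - (c ^+ 2 + P) by lra.
    have hh2 : 0 <= c * t + (c ^+ 2 + P) by nra.
    have := mulr_ge0 hh hh2; nra.
  have h2 : 4 * c ^+ 2 * P <= (c ^+ 2 + P) ^+ 2.
    have := sqr_ge0 (c ^+ 2 - P); nra.
  have h3 : c ^+ 2 * (4 * P) <= c ^+ 2 * t ^+ 2 by nra.
  have c2 : 0 < c ^+ 2 by apply: exprn_gt0.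
  rewrite ler_pM2l // in h3; lra.
have q0 : 0 <= q by exact: sqrtr_ge0.
have qq : q ^+ 2 = t ^+ 2 - 4 * P by rewrite sqr_sqrtr.
split; first by nra.
nra.
Qed.

End Num.

End P4.
Import P4.

Module P5.
Set Implicit Arguments. Unset Strict Implicit. Unset Printing Implicit Defensive.
Local Open Scope classical_set_scope.

Section Mat.
Variable R : realType.

Lemma nz_kernel_col m n (A : 'M[R]_(m, n)) : (\rank A < n)%N ->
  exists2 x : 'cV_n, A *m x = 0 & x != 0.
Proof.
move=> hr.
have hK : kermx A^T != 0.
  by rewrite -mxrank_eq0 mxrank_ker mxrank_tr -lt0n subn_gt0.
have [i hi] : exists i, row i (kermx A^T) != 0.
  apply/existsP; apply: contraR hK; rewrite negb_exists => /forallP h.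
  apply/eqP/row_matrixP => i; rewrite row0; exact/eqP/negPn/h.
exists (row i (kermx A^T))^T; last by rewrite trmx_eq0.
have /sub_kermxP h : (row i (kermx A^T) <= kermx A^T)%MS by exact: row_sub.
by have := congr1 trmx h; rewrite trmx_mul trmxK trmx0.
Qed.

Variables (n1 n2 : nat) (C : 'M[R]_(n2, n1)).

Lemma ker_eig1 g1 g2 : (\rank C < n1)%N -> eigenvalue (Mgd C g1 g2) (1 - g1).
Proof.
move=> /nz_kernel_col [x hx x0]; apply/eig_colP; exists (col_mx x 0).
  rewrite /Mgd mul_block_col !mulmx0 !addr0 mul_scalar_mx -scalemxAl hx scaler0.
  by rewrite scale_col_mx scaler0.
by rewrite col_mx_eq0 negb_and x0.
Qed.

Lemma ker_eig2 g1 g2 : (\rank C < n2)%N -> eigenvalue (Mgd C g1 g2) (1 - g2).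
Proof.
rewrite -mxrank_tr => /nz_kernel_col [y hy y0]; apply/eig_colP; exists (col_mx 0 y).
  rewrite /Mgd mul_block_col !mulmx0 !add0r -scalemxAl hy scaler0 mulmxDl.
  rewrite mul_scalar_mx -scalemxAl -mulmxA hy mulmx0 scaler0 addr0.
  by rewrite scale_col_mx scaler0.
by rewrite col_mx_eq0 negb_and y0 orbT.
Qed.

Lemma blk_eig g1 g2 lam z (y0 : 'cV_n2) : y0 != 0 -> C *m C^T *m y0 = lam *: y0 ->
  lam != 0 -> g1 != 0 ->
  z * z - (2 - g1 - g2 + g1 * g2 * lam) * z + (1 - g1) * (1 - g2) = 0 ->
  eigenvalue (Mgd C g1 g2) z.
Proof.
move=> y00 hy l0 g10 hz.
set x0 := C^T *m y0.
have hCx : C *m x0 = lam *: y0 by rewrite /x0 mulmxA.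
have x00 : x0 != 0.
  apply: contraNneq y00 => e; move: hCx; rewrite e mulmx0 => /esym/eqP.
  by rewrite scaler_eq0 (negbTE l0).
apply/eig_colP; exists (col_mx (g1 *: x0) ((1 - g1 - z) *: y0)); last first.
  by rewrite col_mx_eq0 scaler_eq0 negb_and negb_or g10 x00.
rewrite /Mgd mul_block_col scale_col_mx; congr col_mx.
  rewrite mul_scalar_mx -!scalemxAl -!scalemxAr -/x0 !scalerA -scalerDl.
  congr (_ *: _); ring.
rewrite mulmxDl mul_scalar_mx -!scalemxAl -!scalemxAr hCx -mulmxA -/x0 hCx.
rewrite !scalerA -!scalerDl; congr (_ *: _).
apply/eqP; rewrite -subr_eq0; apply/eqP; rewrite -hz; ring.
Qed.

End Mat.

End P5.
Import P5.

Module P6.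
Set Implicit Arguments. Unset Strict Implicit. Unset Printing Implicit Defensive.
Local Open Scope classical_set_scope.

Section Cplx.
Variable R : realType.
Variables (n1 n2 : nat) (C : 'M[R]_(n2, n1)).

Lemma cplx_bound g lam : 1 <= g -> lam * (g * g) = 4 * (g - 1) ->
  (forall r, eigenvalue (C *m C^T) r -> r <= lam) ->
  forall z, eigenvalue (map_mx (real_complex R) (Mgd C g g)) z ->
  complex.Re `|z| <= g - 1.
Proof.
move=> g1 hl hlam z /eig_colP [v hv v0].
set a := 1 - g.
set Cc := map_mx (real_complex R) C.
rewrite -(vsubmxK v) /Mgd map_block_mx mul_block_col scale_col_mx in hv.
have [e1 e2] := eq_col_mx hv.
set x := usubmx v in e1 e2; set y := dsubmx v in e1 e2.
rewrite !map_mxZ !map_scalar_mx map_mxD map_mxZ map_scalar_mx map_mxM -map_trmx in e1 e2.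
rewrite -/Cc !rmorphN rmorphM /= in e1 e2.
set G := (g%:C)%C in e1 e2; set Aa := ((1 - g)%:C)%C in e1 e2.
have hGG : ((g * g)%:C)%C = G * G by rewrite /G rmorphM.
rewrite hGG in e2.
have hva : v = col_mx x y by rewrite vsubmxK.
have G0 : G != 0 by rewrite /G eq_complex /= negb_and; apply/orP; left; apply/eqP; lra.
have [za|zna] := eqVneq z Aa.
  rewrite za normc_def /= expr0n /= addr0 sqrtr_sqr ler0_norm; lra.
set u := Cc *m x.
have s1 : G *: (Cc^T *m y) = (Aa - z) *: x.
  move: e1; rewrite mul_scalar_mx -scalemxAl scaleNr => e1.
  by rewrite scalerBl -e1 opprD addrA subrr add0r opprK.
have t2 : (G * G) *: (Cc *m Cc^T *m y) = (G * (Aa - z)) *: u.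
  by rewrite -mulmxA -scalerA scalemxAr s1 -scalemxAr scalerA.
have s2 : (z - Aa) *: y = - (G * z) *: u.
  move: e2; rewrite mulmxDl mul_scalar_mx -!scalemxAl t2 -/u => e2.
  rewrite scalerBl -e2 [Aa *: y + _]addrC addrA addrK -scalerDl.
  congr (_ *: _); ring.
have h3 : ((z - Aa) * (Aa - z)) *: x = (G * - (G * z)) *: (Cc^T *m u).
  have := congr1 (fun m => G *: (Cc^T *m m)) s2 => /=.
  rewrite -!scalemxAr => h; rewrite -[RHS]scalerA -h [RHS]scalerA [G * (z - Aa)]mulrC -[RHS]scalerA s1.
  by rewrite [RHS]scalerA.
have x0 : x != 0.
  apply/eqP => x0e; move/eqP: v0; apply.
  have : (z - Aa) *: y = 0 by rewrite s2 /u x0e mulmx0 scaler0.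
  move/eqP; rewrite scaler_eq0 subr_eq0 (negbTE zna) /= => /eqP y0e.
  by rewrite hva x0e y0e col_mx0.
have z0 : z != 0.
  apply/eqP => z0e; move: h3; rewrite z0e !(mulr0, oppr0, subr0, sub0r, addr0, scale0r) => /eqP.
  rewrite scaler_eq0 (negbTE x0) orbF mulNr oppr_eq0 mulf_eq0 orbb => /eqP Aa0.
  by move/eqP: zna; apply; rewrite z0e Aa0.
set k2 := G * - (G * z) in h3.
have k20 : k2 != 0 by rewrite /k2 mulf_neq0 // oppr_eq0 mulf_neq0.
have k10 : (z - Aa) * (Aa - z) != 0.
  by rewrite mulf_neq0 // subr_eq0 // eq_sym.
set w := ((z - Aa) * (Aa - z)) / k2.
have hW : Cc^T *m u = w *: x.
  by rewrite /w [_ / k2]mulrC -scalerA h3 scalerA mulVf // scale1r.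
have u0 : u != 0.
  apply/eqP => u0e; move: h3; rewrite u0e mulmx0 scaler0 => /eqP.
  by rewrite scaler_eq0 (negbTE k10) (negbTE x0).
have hu : Cc *m Cc^T *m u = w *: u by rewrite -mulmxA hW -scalemxAr.
have w0 := real_sym_eig u0 hu.
have [wr r0] := ge0_complex w0.
set r := complex.Re w in wr r0.
have er : eigenvalue (C *m C^T) r.
  rewrite -eig_toC; apply/eig_colP; exists u => //.
  change (map_mx (fun x => (x%:C)%C) (C *m C^T)) with (map_mx (real_complex R) (C *m C^T)).
  by rewrite map_mxM -map_trmx -/Cc hu wr.
have rl := hlam _ er.
have eqz : (z - Aa) * (Aa - z) = (r%:C)%C * k2 by rewrite -wr /w divfK.
have [zr [zi ez]] : exists zr zi, z = (zr +i* zi)%C by case: (z) => p q; exists p, q.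
rewrite /k2 /G /Aa ez in eqz.
have hre := congr1 (@complex.Re R) eqz; have him := congr1 (@complex.Im R) eqz.
move: hre him; simpc => /= hre him.
have hq : zr ^+ 2 + zi ^+ 2 <= (1 - g) ^+ 2.
  apply: (@quad_bound R (1 - g) (g * g * r)); try lra.
  - by rewrite !mulr_ge0 //; lra.
  - have : g * g * r <= g * g * lam by rewrite ler_wpM2l // mulr_ge0 //; lra.
    lra.
rewrite ez /= -[X in _ <= X]ger0_norm; last lra.
rewrite -[`|g - 1|]sqrtr_sqr ler_sqrt ?sqr_ge0 //.
by have -> : (g - 1) ^+ 2 = (1 - g) ^+ 2 by ring.
Qed.
End Cplx.

End P6.
Import P6.


Lemma ReabsC (R : realType) (r : R) : complex.Re `|(r%:C)%C| = `|r|.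
Proof. by rewrite normc_def /= expr0n /= addr0 sqrtr_sqr. Qed.

Lemma rho_ge (R : realType) n (M : 'M[R]_n) r : eigenvalue M r -> `|r| <= spectral_radius M.
Proof.
by move=> e; rewrite -ReabsC; apply: (rho_spec M).1; rewrite eig_toC.
Qed.

Arguments rho_ge {R n M r}.

Theorem mainTheorem15 (R : realType) (m n1 n2 : nat)
  (A1 : 'M[R]_(m, n1)) (A2 : 'M[R]_(m, n2)) :
  \rank (row_mx A1 A2) = (n1 + n2)%N ->
  A1^T *m A1 = 1%:M ->
  A2^T *m A2 = 1%:M ->
  A2^T *m A1 != 0 ->
  (\rank (A2^T *m A1) < minn n1 n2)%N ->
  let C := A2^T *m A1 in
  let lam := lambda_max (C *m C^T) in
  let g := 2 / (1 + Num.sqrt (1 - lam)) in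
  spectral_radius (Mgd C g g) = g - 1 /\
  (forall g1 g2 : R, 1 <= g1 -> 1 <= g2 -> g - 1 <= spectral_radius (Mgd C g1 g2)) /\
  g - 1 = (1 - Num.sqrt (1 - lam)) / (1 + Num.sqrt (1 - lam)).
Proof.
move=> _ h1 h2 _ hr C lam g.
have hr1 : (\rank C < n1)%N by move: hr; rewrite leq_min => /andP[].
have hr2 : (\rank C < n2)%N by move: hr; rewrite leq_min => /andP[].
have [hub hl0] := lam_spec (C *m C^T).
rewrite -/lam in hub hl0.
have hb : forall r, eigenvalue (C *m C^T) r -> 0 <= r <= 1 := eig_bounds h1 h2.
clear h1 h2 hr.
have lam01 : 0 <= lam <= 1.
  case: hl0 => [->|/hb //]; lra.
set s := Num.sqrt (1 - lam) in g *.
have s0 : 0 <= s by exact: sqrtr_ge0.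
have ss : s ^+ 2 = 1 - lam by rewrite sqr_sqrtr; lra.
have s1 : s <= 1.
  by rewrite -(ler_pXn2r (n := 2)) ?expr1n ?nnegrE //; lra.
have s10 : 1 + s != 0 by apply/eqP; lra.
have eg : g * (1 + s) = 2 by rewrite /g mulfVK.
have g1 : 1 <= g by nra.
have g2 : g <= 2 by nra.
have hlg : lam * (g * g) = 4 * (g - 1).
  have el : lam = 1 - s ^+ 2 by lra.
  rewrite el; nra.
split; last first.
  split; last by rewrite /g; field.
  move=> x1 x2 hx1 hx2.
  have [hc1|hc1] := leP (g - 1) (x1 - 1).
    have h := rho_ge (ker_eig1 x1 x2 hr1).
    rewrite distrC ger0_norm in h; lra.
  have [hc2|hc2] := leP (g - 1) (x2 - 1).
    have h := rho_ge (ker_eig2 x1 x2 hr2).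
    rewrite distrC ger0_norm in h; lra.
  have lpos : lam != 0.
    apply/eqP => l0; move: ss; rewrite l0 subr0 => ss1.
    have : s = 1 by nra.
    move=> s1e; move: eg; rewrite s1e => eg1; lra.
  have el : eigenvalue (C *m C^T) lam by case: hl0 => // /eqP; rewrite (negbTE lpos).
  have [y0 hy y00] := (eig_colP _ _).1 el.
  set c := g - 1.
  have c0 : 0 < c.
    rewrite /c; have : 0 < lam by rewrite lt_def lpos; case/andP: lam01.
    nra.
  have hcore := @core_ineq R c (x1 - 1) (x2 - 1) lam c0 ltac:(rewrite /c; lra)
    ltac:(apply/andP; split; rewrite /c; lra) ltac:(apply/andP; split; rewrite /c; lra)
    ltac:(rewrite /c; have -> : 1 + (g - 1) = g by ring; rewrite expr2; lra).
  set t := 2 - x1 - x2 + x1 * x2 * lam.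
  set P := (x1 - 1) * (x2 - 1).
  have hct : c ^+ 2 + P <= c * t.
    have -> : t = - ((x1 - 1) + (x2 - 1)) + (1 + (x1 - 1)) * (1 + (x2 - 1)) * lam by rewrite /t; ring.
    exact: hcore.
  have P0 : 0 <= P by rewrite /P mulr_ge0 //; lra.
  have [hroot hge] := @root_ge R c t P c0 P0 hct.
  set z0 := (t + Num.sqrt (t ^+ 2 - 4 * P)) / 2 in hroot hge.
  have ez : eigenvalue (Mgd C x1 x2) z0.
    apply: (blk_eig y00 hy lpos); first by apply/eqP; lra.
    by rewrite -/t; have -> : (1 - x1) * (1 - x2) = P by rewrite /P; ring.
  have h := rho_ge ez; have := ler_norm z0; lra.
apply/le_anti/andP; split.
  apply: (rho_spec (Mgd C g g)).2.
    by exists ((1 - g)%:C)%C; rewrite eig_toC; exact: ker_eig1.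
  exact: (cplx_bound g1 hlg (fun r er => hub r er)).
have h := rho_ge (ker_eig1 g g hr1).
rewrite distrC ger0_norm in h; lra.
Qed.
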